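(* If $k\ge2$ is an integer, there is no $k$-tuple $(a_1,\dots,a_k)$ of real numbers satisfying $$0<a_i<|a_1+\cdots+a_{i-1}-(a_{i+1}+\cdots+a_k)|\quad\text{for all }1\le i\le k.$$
   Context: Empty sums are zero. *)

(* Defs.v *)
From HB Require Import structures.
From mathcomp Require Import all_boot all_order all_algebra.
From mathcomp Require Import reals.

(* Main.v *)
Require Import Defs.
From HB Require Import structures.
From mathcomp Require Import all_boot all_order all_algebra.
From mathcomp Require Import reals.
From mathcomp Require Import ring lra.
Import Order.TTheory GRing.Theory Num.Theory.
Local Open Scope ring_scope.

Lemma sumL (R : realType) k (a : 'I_k -> R) (i : 'I_k) :
  \sum_(j < k | (j < i.+1)%N) a j = a i + \sum_(j < k | (j < i)%N) a j.
Proof.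
rewrite (bigD1 i) ?ltnSn //=; congr (_ + _); apply: eq_bigl => j.
by rewrite ltnS -val_eqE /= andbC -ltn_neqAle.
Qed.

Lemma sumR (R : realType) k (a : 'I_k -> R) (i : 'I_k) n :
  i = n.+1 :> nat ->
  \sum_(j < k | (n < j)%N) a j = a i + \sum_(j < k | (i < j)%N) a j.
Proof.
move=> hi; rewrite (bigD1 i) /=; last by rewrite hi.
congr (_ + _); apply: eq_bigl => j.
by rewrite -val_eqE /= hi andbC eq_sym -ltn_neqAle.
Qed.

Theorem mainTheorem7 (R : realType) (k : nat) (hk : (2 <= k)%N) :
  ~ exists a : 'I_k -> R,
      forall i : 'I_k,
        0 < a i /\
        a i < `| \sum_(j < k | (j < i)%N) a j - \sum_(j < k | (i < j)%N) a j |.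
Proof.
case=> a H.
pose D (i : 'I_k) := \sum_(j < k | (j < i)%N) a j - \sum_(j < k | (i < j)%N) a j.
have key : forall (i : 'I_k), D i < 0 -> D i < - a i.
  move=> i Hi; have [_ h] := H i; rewrite -/(D i) ltr0_norm // in h.
  by rewrite ltrNr.
have ind : forall n (hn : (n < k)%N), D (Ordinal hn) < - a (Ordinal hn).
  elim=> [|n IH] hn.
    apply: key; rewrite /D big_pred0 // sub0r oppr_lt0.
    rewrite (bigD1 (Ordinal (hk : (1 < k)%N))) //=.
    apply: ltr_wpDr; last by case: (H (Ordinal (hk : (1 < k)%N))).
    by apply: sumr_ge0 => j _; case: (H j) => /ltW.
  have hn' : (n < k)%N := ltnW hn.
  have := IH hn'.
  have e : D (Ordinal hn) = D (Ordinal hn') + a (Ordinal hn') + a (Ordinal hn).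
    rewrite /D /= (sumL _ _ a (Ordinal hn')) /= (sumR _ _ a (Ordinal hn) n) //.
    by rewrite opprD; ring.
  move=> h; apply: key; rewrite e.
  have h2 : D (Ordinal hn') + a (Ordinal hn') < 0 by rewrite -ltrBrDr sub0r.
  case: (H (Ordinal hn)) => hpos hlt.
  have := H (Ordinal hn); rewrite -/(D _) e.
  case=> _; set x := D _ + _ + _.
  case: (ltrP x 0) => // hx.
  by rewrite ger0_norm // ltrDr ltNge (ltW h2).
have hk0 : (k.-1 < k)%N by case: k hk {a H D key ind}.
have := ind _ hk0; rewrite /D.
rewrite [X in _ - X]big_pred0 => [|j]; last by rewrite ltnNge -ltnS prednK ?ltn_ord //; case: k hk {a H D key ind j hk0}.
rewrite subr0 => h.
have : 0 <= \sum_(j < k | (j < k.-1)%N) a j by apply: sumr_ge0 => j _; case: (H j) => /ltW.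
have : 0 < a (Ordinal hk0) by case: (H (Ordinal hk0)).
move: h; set s := \sum_(_ < _ | _) _; set y := a _.
move=> h1 h2 h3; lra.
Qed.
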